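(* A permutation $w \in \mathfrak{S}_n$ is a prism if and only if there exists $i \in \textsf{supp}(w)$ that is unconfined in the reduced words of $w$; that is, if and only if there exist a letter $i$ and a reduced word $s$ of $w$ such that $i$ appears exactly once in $s$, and this occurrence of $i$ lies neither between two occurrences of $i+1$ nor between two occurrences of $i-1$ in $s$.
   Context: $\sigma_i$ ($1\le i\le n-1$) is the simple transposition swapping $i$ and $i+1$; products are compositions of maps. A reduced word of $w$ is a word $i_1\cdots i_\ell$ of minimal length with $w=\sigma_{i_1}\cdots\sigma_{i_\ell}$. $\textsf{supp}(w)$ is the set of letters appearing in (any) reduced word of $w$. Bruhat order: $u \preceq w$ iff some reduced word of $u$ is a subword of some reduced word of $w$; $B(w)=\{u:u\preceq w\}$. A permutation $w$ is a prism if $B(w) \cong \mathbf{2} \times X$ as posets for some poset $X$, where $\mathbf{2}$ is the two-element chain (equivalently, $B(w)\cong B\times X$ for some nontrivial boolean algebra $B$). *)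

(* Defs.v *)
From mathcomp Require Import all_boot all_order all_fingroup.
Set Implicit Arguments. Unset Strict Implicit. Unset Printing Implicit Defensive.
Local Open Scope group_scope.

(* Letters are 1-indexed as in the paper: letter i (1 <= i <= n-1) is the
   simple transposition swapping the (1-indexed) values i and i+1, i.e. the
   ordinals i-1 and i of 'I_n. Out-of-range letters are mapped to 1 but are
   never used (words are required to be valid). *)
Definition sigma (n i : nat) : {perm 'I_n} :=
  match (insub i.-1 : option 'I_n), (insub i : option 'I_n) with
  | Some a, Some b => if 0 < i then tperm a b else 1
  | _, _ => 1
  end.

Definition valid_word (n : nat) (s : seq nat) : bool :=
  all (fun i => (0 < i) && (i < n)) s.

(* word_perm [:: i1; ...; il] = sigma_i1 o ... o sigma_il as maps
   (mathcomp's (p * q) x = q (p x)). *)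
Definition word_perm (n : nat) (s : seq nat) : {perm 'I_n} :=
  foldr (fun i p => p * sigma n i) 1 s.

Definition reduced_word (n : nat) (w : {perm 'I_n}) (s : seq nat) : Prop :=
  [/\ valid_word n s, word_perm n s = w &
      forall t, valid_word n t -> word_perm n t = w -> size s <= size t].

Definition bruhat (n : nat) (u w : {perm 'I_n}) : Prop :=
  exists su sw, [/\ reduced_word u su, reduced_word w sw & subseq su sw].

Definition Bint (n : nat) (w : {perm 'I_n}) : Type := {u : {perm 'I_n} | bruhat u w}.

Definition is_partial_order (X : Type) (le : X -> X -> Prop) : Prop :=
  [/\ forall x, le x x,
      forall x y, le x y -> le y x -> x = y &
      forall x y z, le x y -> le y z -> le x z].

Definition le2 (a b : bool) : Prop := a ==> b.

Definition prism (n : nat) (w : {perm 'I_n}) : Prop :=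
  exists (X : Type) (leX : X -> X -> Prop) (f : Bint w -> bool * X),
    [/\ is_partial_order leX, bijective f &
        forall u v : Bint w,
          bruhat (sval u) (sval v) <-> (le2 (f u).1 (f v).1 /\ leX (f u).2 (f v).2)].

Definition between (s : seq nat) (p j : nat) : Prop :=
  exists a b, [/\ a < p < b, b < size s, nth 0 s a = j & nth 0 s b = j].

Definition unconfined_in (s : seq nat) (i : nat) : Prop :=
  [/\ (count_mem i s = 1)%N,
      ~ between s (index i s) i.+1 &
      ~ between s (index i s) i.-1].

(* Main.v *)
Require Import Defs.
From mathcomp Require Import all_boot all_fingroup.
From mathcomp Require Import zify.
From Stdlib Require Import ProofIrrelevance IndefiniteDescription.
Set Implicit Arguments. Unset Strict Implicit. Unset Printing Implicit Defensive.
Local Open Scope group_scope.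

Lemma two_point (I : finType) (F G : I -> nat) (q1 q2 : I) :
  q1 != q2 -> (forall x, x != q1 -> x != q2 -> F x = G x) ->
  (\sum_x F x + G q1 + G q2 = \sum_x G x + F q1 + F q2)%N.
Proof.
move=> ne FG.
rewrite (bigD1 q1) //= (bigD1 q2) /=; last by rewrite eq_sym ne.
rewrite [in RHS](bigD1 q1) //= [in RHS](bigD1 q2) /=; last by rewrite eq_sym ne.
rewrite (eq_bigr G); first by lia.
by move=> x /andP[h1 h2]; apply: FG.
Qed.

Lemma sum_lt_ord (m P : nat) : (\sum_(i < m) (i < P : nat) = minn P m)%N.
Proof.
elim: m => [|m IH]; first by rewrite big_ord0; lia.
rewrite big_ord_recr /= IH; case: (ltnP m P) => h /=; lia.
Qed.
Section Basics.
Variable n : nat.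
Implicit Types (u w : {perm 'I_n}) (s t : seq nat).

Lemma sigmaE k (a b : 'I_n) : (a : nat) = k.-1 -> (b : nat) = k -> 0 < k -> sigma n k = tperm a b.
Proof.
move=> ea eb k0; rewrite /sigma.
have -> : (insub k.-1 : option 'I_n) = Some a by rewrite -ea valK.
have -> : (insub k : option 'I_n) = Some b by rewrite -eb valK.
by rewrite k0.
Qed.

Lemma sigma_valid k : 0 < k < n ->
  exists a b : 'I_n, [/\ (a : nat) = k.-1, (b : nat) = k & sigma n k = tperm a b].
Proof.
case/andP=> k0 kn.
have h1 : k.-1 < n by lia.
exists (Ordinal h1), (Ordinal kn); split => //; exact: sigmaE.
Qed.

Lemma sigma_inv k : sigma n k * sigma n k = 1.
Proof.
rewrite /sigma; case: (insub k.-1 : option 'I_n) => [a|]; case: (insub k : option 'I_n) => [b|] //;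
  try by rewrite mulg1.
by case: (0 < k); rewrite ?tperm2 ?mulg1.
Qed.

Lemma word_cat s1 s2 : word_perm n (s1 ++ s2) = word_perm n s2 * word_perm n s1.
Proof.
elim: s1 => [|x s1 IH] /=; first by rewrite mulg1.
by rewrite IH mulgA.
Qed.

Lemma word_rcons s k : word_perm n (rcons s k) = sigma n k * word_perm n s.
Proof. by rewrite -cats1 word_cat /= mul1g. Qed.

Lemma word_cons s k : word_perm n (k :: s) = word_perm n s * sigma n k.
Proof. by []. Qed.

Definition inv u : nat :=
  \sum_(p : 'I_n * 'I_n) ((p.1 < p.2) && (u p.2 < u p.1)).

Lemma inv1 : inv 1 = 0.
Proof. by apply: big1 => p _; rewrite !perm1; case: ltngtP. Qed.

Lemma tperm_val (a b x : 'I_n) :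
  (tperm a b x : nat) = if x == a then (b : nat) else if x == b then (a : nat) else (x : nat).
Proof.
case: tpermP => [->|->|/eqP h1 /eqP h2]; rewrite ?eqxx //.
  by case: eqP => [->|].
by rewrite (negPf h1) (negPf h2).
Qed.

Lemma inv_swap u (a b : 'I_n) : (b : nat) = (a : nat).+1 ->
  inv (tperm a b * u) + (u b < u a) = inv u + (u a < u b).
Proof.
move=> eb.
have ab : a != b by apply/eqP => h; move: eb; rewrite h; lia.
set t := tperm a b.
have -> : inv (t * u) =
  \sum_(p : 'I_n * 'I_n) ((t p.1 < t p.2) && (u p.2 < u p.1)).
  rewrite /inv (reindex_inj (h := fun p : 'I_n * 'I_n => (t p.1, t p.2))) /=.
    by apply: eq_bigr => p _; rewrite !permM !tpermK.
  by move=> [x1 x2] [y1 y2] [] /perm_inj -> /perm_inj ->.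
have := @two_point _ (fun p : 'I_n * 'I_n => (t p.1 < t p.2) && (u p.2 < u p.1))
   (fun p : 'I_n * 'I_n => (p.1 < p.2) && (u p.2 < u p.1)) (a, b) (b, a).
rewrite /= /t tpermL tpermR.
have -> : (a < b) = true by rewrite eb; lia.
have -> : (b < a) = false by rewrite eb; lia.
rewrite /=.
have ne : (a, b) != (b, a) by rewrite xpair_eqE negb_and ab.
move=> /(_ ne) H.
lapply H; first by move=> H1; rewrite /inv /t; move: H1; rewrite !addn0.
move=> [x y] /=; rewrite !xpair_eqE !negb_and => h1 h2.
congr (_ && _); rewrite !tperm_val.
move: h1 h2 ab; rewrite -!(inj_eq val_inj) /=.
by repeat case: eqP => //=; lia.
Qed.

Lemma valid_rcons s k : valid_word n (rcons s k) = valid_word n s && (0 < k < n).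
Proof. by rewrite /valid_word all_rcons andbC. Qed.

Lemma valid_cat s1 s2 : valid_word n (s1 ++ s2) = valid_word n s1 && valid_word n s2.
Proof. by rewrite /valid_word all_cat. Qed.

Lemma inv_sigma u k : 0 < k < n -> inv (sigma n k * u) <= (inv u).+1.
Proof.
move=> kv; have [a [b [ea eb ->]]] := sigma_valid kv.
have := @inv_swap u a b; rewrite ea eb; have -> : k.-1.+1 = k by lia.
move=> /(_ erefl); case: (u b < u a); case: (u a < u b) => /= h; set z := inv (_ * u) in h *; lia.
Qed.

Lemma inv_le_size t : valid_word n t -> inv (word_perm n t) <= size t.
Proof.
elim/last_ind: t => [|t k IH]; first by rewrite /= inv1.
rewrite valid_rcons word_rcons size_rcons => /andP[vt kv].
by apply: leq_trans (inv_sigma _ kv) _; rewrite ltnS IH.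
Qed.

Lemma incr_ge (v : {perm 'I_n}) : (forall x y : 'I_n, x < y -> v x < v y) ->
  forall x : 'I_n, x <= v x.
Proof.
move=> inc; suff H : forall m (x : 'I_n), (x : nat) = m -> m <= v x.
  by move=> x; exact: H.
elim=> [//|m IH] x ex.
have mn : m < n by have := ltn_ord x; lia.
have := IH (Ordinal mn) erefl; have := inc (Ordinal mn) x; rewrite ex /= => /(_ (ltnSn m)).
lia.
Qed.



Lemma descent u : u != 1 ->
  exists a b : 'I_n, (b : nat) = (a : nat).+1 /\ u b < u a.
Proof.
move=> u1; case: (boolP [exists a : 'I_n, exists b : 'I_n, ((b : nat) == a.+1) && (u b < u a)]).
  by move=> /existsP[a /existsP[b /andP[/eqP eb h]]]; exists a, b.
move=> H; exfalso; move/eqP: u1; apply; apply/permP => x; rewrite perm1.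
have adj : forall a b : 'I_n, (b : nat) = (a : nat).+1 -> u a < u b.
  move=> a b eb; rewrite ltn_neqAle; apply/andP; split.
    rewrite (inj_eq val_inj) (inj_eq perm_inj); apply/eqP=> e.
    by move: eb; rewrite e; lia.
  rewrite leqNgt; apply/negP => h; apply: (negP H).
  by apply/existsP; exists a; apply/existsP; exists b; rewrite eb eqxx h.
have mono : forall d (x y : 'I_n), (y : nat) = x + d.+1 -> u x < u y.
  elim=> [|d IH] x0 y0 ey; first by apply: adj; lia.
  have zn : x0 + d.+1 < n by have := ltn_ord y0; lia.
  apply: ltn_trans (IH x0 (Ordinal zn) erefl) _; apply: adj => /=; lia.
have inc : forall x y : 'I_n, x < y -> u x < u y.
  move=> x0 y0 lt; apply: (mono (y0 - x0.+1)); lia.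
have incV : forall x y : 'I_n, x < y -> u^-1 x < u^-1 y.
  move=> x0 y0 lt; rewrite ltnNge leq_eqVlt; apply/negP => /orP[/eqP e|h].
    by move: lt; rewrite -(permKV u x0) -(permKV u y0) (val_inj e) ltnn.
  by move: (inc _ _ h); rewrite !permKV; lia.
have g1 := incr_ge inc x; have g2 := incr_ge incV x.
apply/val_inj/eqP; rewrite eqn_leq g1 andbT.
have : u x <= u (u^-1 x).
  move: g2; rewrite leq_eqVlt => /orP[/eqP e|h]; last by apply: ltnW; apply: inc.
  by rewrite -(val_inj e).
by rewrite permKV.
Qed.

Lemma word_exists u : exists t, [/\ valid_word n t, word_perm n t = u & size t = inv u].
Proof.
have [m hm] := ubnP (inv u); elim: m u hm => // m IH u hu.
case: (eqVneq u 1) => [->|u1]; first by exists [::]; rewrite inv1.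
have [a [b [eb ub]]] := descent u1.
have kv : 0 < (b : nat) < n by rewrite ltn_ord eb andbT.
have [a' [b' [ea' eb' sk]]] := sigma_valid kv.
have ea : a' = a by apply: val_inj => /=; lia.
have eb2 : b' = b by apply: val_inj => /=; lia.
rewrite {}ea {}eb2 in sk.
have := @inv_swap u a b eb; rewrite ub => hi.
have [t [vt wt st]] := IH (tperm a b * u) (ltac:(move: hu; rewrite ltnS; lia)).
exists (rcons t b); rewrite valid_rcons vt kv word_rcons wt sk mulgA tperm2 mul1g.
split=> //; rewrite size_rcons st; move: hi; case: (ltngtP (u a) (u b)) => //; lia.
Qed.

Lemma reduced_wordE w s : reduced_word w s <->
  [/\ valid_word n s, word_perm n s = w & size s = inv w].
Proof.
split.
  case=> vs ws mn; split => //; apply/eqP; rewrite eqn_leq; apply/andP; split.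
    by have [t [vt wt st]] := word_exists w; rewrite -st mn.
  by rewrite -ws inv_le_size.
case=> vs ws ss; split => // t vt wt; rewrite ss -wt; exact: inv_le_size.
Qed.

Definition rk u (P v : nat) : nat := \sum_(Q : 'I_n) ((Q < P) && (v <= u Q)).
Definition leT u w := forall P v, rk u P v <= rk w P v.

Lemma leT_refl u : leT u u. Proof. by move=> P v. Qed.
Lemma leT_trans u1 u2 u3 : leT u1 u2 -> leT u2 u3 -> leT u1 u3.
Proof. by move=> h1 h2 P v; apply: leq_trans (h1 P v) (h2 P v). Qed.

Lemma rk_succ u (Q0 : 'I_n) v : rk u Q0.+1 v = rk u Q0 v + (v <= u Q0).
Proof.
rewrite /rk (bigD1 Q0) //= [in RHS](bigD1 Q0) //= ltnSn ltnn /=.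
rewrite addnC; congr (_ + _); apply: eq_bigr => Q hQ.
have hQ' : (Q : nat) != Q0 by [].
by rewrite ltnS leq_eqVlt (negPf hQ').
Qed.

Lemma rk_swap u (a b : 'I_n) P v : (b : nat) = (a : nat).+1 ->
  rk (tperm a b * u) P v + ((a < P) && (v <= u a)) + ((b < P) && (v <= u b)) =
  rk u P v + ((a < P) && (v <= u b)) + ((b < P) && (v <= u a)).
Proof.
move=> eb.
have ab : a != b by apply/eqP => h; move: eb; rewrite h; lia.
have H := @two_point _ (fun Q : 'I_n => (Q < P) && (v <= (tperm a b * u)%g Q))
   (fun Q : 'I_n => (Q < P) && (v <= u Q)) a b ab.
lapply H.
  by rewrite /= !permM tpermL tpermR /rk.
by move=> x xa xb /=; rewrite permM tpermD // eq_sym.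
Qed.

Lemma rk_swap_ne u (a b : 'I_n) (P v : nat) : (b : nat) = (a : nat).+1 -> P != (b : nat) ->
  rk (tperm a b * u) P v = rk u P v.
Proof.
move=> eb Pb; have := rk_swap u P v eb.
have [h|h] := leqP P a.
  have -> : (b < P) = false by lia.
  by rewrite /= !addn0.
have -> : (b < P) = true by move: Pb; case: eqP => //; lia.
by rewrite /=; case: (v <= u a); case: (v <= u b) => /=; lia.
Qed.

Lemma rk_swap_b u (a b : 'I_n) v : (b : nat) = (a : nat).+1 ->
  rk (tperm a b * u) b v = rk u a v + (v <= u b).
Proof.
move=> eb; have h1 := rk_succ u a v; rewrite -eb in h1.
have := rk_swap u b v eb; rewrite ltnn.
have -> : (a < b) = true by lia.
by move: h1; rewrite /=; case: (v <= u a); case: (v <= u b) => /=; lia.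
Qed.

Lemma rk_b1 u (a b : 'I_n) v : (b : nat) = (a : nat).+1 ->
  rk u b.+1 v = rk u a v + (v <= u a) + (v <= u b).
Proof. by move=> eb; rewrite rk_succ eb -rk_succ -eb. Qed.

Lemma rk_b1' u (a b : 'I_n) v : (b : nat) = (a : nat).+1 ->
  rk u b v = rk u a v + (v <= u a).
Proof. by move=> eb; rewrite eb rk_succ. Qed.

Ltac bcase x y := case: (leqP x y) => ? /=.

Lemma leT_up u w (a b : 'I_n) : (b : nat) = (a : nat).+1 -> leT u w -> w a < w b ->
  leT u (tperm a b * w) /\ leT (tperm a b * u) (tperm a b * w).
Proof.
move=> eb H wab; split => P v; (case: (P =P (b : nat)) => [->|/eqP Pb];
  last by rewrite ?(rk_swap_ne w v eb Pb) ?(rk_swap_ne u v eb Pb); apply: H).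
- rewrite (rk_swap_b w v eb) (rk_b1' u v eb).
  have hA := H a v; have hB := H b.+1 v; rewrite !(rk_b1 _ _ eb) in hB.
  move: hA hB; bcase v (u a); bcase v (u b); bcase v (w a); bcase v (w b); lia.
- rewrite (rk_swap_b w v eb) (rk_swap_b u v eb).
  have hA := H a v; have hB := H b.+1 v; rewrite !(rk_b1 _ _ eb) in hB.
  move: hA hB; bcase v (u a); bcase v (u b); bcase v (w a); bcase v (w b); lia.
Qed.

Lemma leT_down u w (a b : 'I_n) : (b : nat) = (a : nat).+1 -> leT u w -> w b < w a ->
  (u a < u b -> leT u (tperm a b * w)) /\ (u b < u a -> leT (tperm a b * u) (tperm a b * w)).
Proof.
move=> eb H wab; split => uab P v; (case: (P =P (b : nat)) => [->|/eqP Pb];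
  last by rewrite ?(rk_swap_ne w v eb Pb) ?(rk_swap_ne u v eb Pb); apply: H).
- rewrite (rk_swap_b w v eb) (rk_b1' u v eb).
  have hA := H a v; have hB := H b.+1 v; rewrite !(rk_b1 _ _ eb) in hB.
  move: hA hB; bcase v (u a); bcase v (u b); bcase v (w a); bcase v (w b); lia.
- rewrite (rk_swap_b w v eb) (rk_swap_b u v eb).
  have hA := H a v; have hB := H b.+1 v; rewrite !(rk_b1 _ _ eb) in hB.
  move: hA hB; bcase v (u a); bcase v (u b); bcase v (w a); bcase v (w b); lia.
Qed.

Lemma subseq_rconsE t s k : subseq t (rcons s k) ->
  subseq t s \/ exists t', t = rcons t' k /\ subseq t' s.
Proof.
case/subseqP => m; case/lastP: m => [|m bb]; first by rewrite size_rcons.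
rewrite !size_rcons => /eqP; rewrite eqSS => /eqP sm; rewrite mask_rcons // => ->.
case: bb => /=; last by left; rewrite cats0 mask_subseq.
by right; exists (mask m s); rewrite cats1 mask_subseq.
Qed.

Lemma sub_leT s : valid_word n s -> size s = inv (word_perm n s) ->
  forall t, subseq t s -> leT (word_perm n t) (word_perm n s).
Proof.
elim/last_ind: s => [|s k IH].
  by move=> _ _ t; rewrite subseq0 => /eqP ->; apply: leT_refl.
rewrite valid_rcons size_rcons word_rcons => /andP[vs kv] hs t.
have [a [b [ea eb sk]]] := sigma_valid kv.
have eab : (b : nat) = (a : nat).+1 by lia.
rewrite sk in hs *.
have hi := inv_swap (word_perm n s) eab.
have hle := inv_le_size vs.
have asc : word_perm n s a < word_perm n s b.
  move: hi hs hle; case: ltngtP => //= h1 h2 h3.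
    set z := inv (_ * word_perm n s) in h2 h3 *; lia.
  by move: h1 => /val_inj /perm_inj ab; move: eab; rewrite ab; lia.
have IH' : forall t, subseq t s -> leT (word_perm n t) (word_perm n s).
  apply: IH => //; move: hi hs hle; rewrite asc.
  have -> : (word_perm n s b < word_perm n s a) = false by lia.
  move=> h1 h2 h3; set z := inv (_ * word_perm n s) in h1 h2 h3 *; lia.
case/subseq_rconsE => [ts|[t' [-> ts]]].
  exact: (leT_up eab (IH' t ts) asc).1.
rewrite word_rcons sk; exact: (leT_up eab (IH' t' ts) asc).2.
Qed.

Lemma leT_antisym u w : leT u w -> leT w u -> u = w.
Proof.
move=> h1 h2; apply/permP => x; apply: val_inj.
have E : forall v, (v <= u x) = (v <= w x).
  move=> v; have e1 := rk_succ u x v; have e2 := rk_succ w x v.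
  have := h1 x v; have := h2 x v; have := h1 x.+1 v; have := h2 x.+1 v.
  rewrite e1 e2; case: (v <= u x); case: (v <= w x) => //=; lia.
by apply/eqP; rewrite eqn_leq -E leqnn E leqnn.
Qed.

Lemma one_leT u : leT 1 u.
Proof.
have [t [vt wt st]] := word_exists u.
have := sub_leT vt (ltac:(by rewrite wt st)) (sub0seq t).
by rewrite wt.
Qed.

Lemma leT_sub s : valid_word n s -> size s = inv (word_perm n s) ->
  forall u, leT u (word_perm n s) ->
  exists t, [/\ subseq t s, size t = inv u & word_perm n t = u].
Proof.
elim/last_ind: s => [|s k IH].
  move=> _ _ u h; have e : u = 1 by apply: leT_antisym => //; apply: one_leT.
  by exists [::]; rewrite e inv1.
rewrite valid_rcons size_rcons word_rcons => /andP[vs kv] hs u hu.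
have [a [b [ea eb sk]]] := sigma_valid kv.
have eab : (b : nat) = (a : nat).+1 by lia.
rewrite sk in hs hu.
have hi := inv_swap (word_perm n s) eab.
have hle := inv_le_size vs.
have asc : word_perm n s a < word_perm n s b.
  move: hi hs hle; case: ltngtP => //= h1 h2 h3.
    set z := inv (_ * word_perm n s) in h2 h3 *; lia.
  by move: h1 => /val_inj /perm_inj ab; move: eab; rewrite ab; lia.
have hsz : size s = inv (word_perm n s).
  move: hi hs hle; rewrite asc.
  have -> : (word_perm n s b < word_perm n s a) = false by lia.
  move=> h1 h2 h3; set z := inv (_ * word_perm n s) in h1 h2 h3 *; lia.
have IH' := IH vs hsz.
set w := tperm a b * word_perm n s in hu.
have wdesc : w b < w a by rewrite /w !permM tpermL tpermR.
have ww : tperm a b * w = word_perm n s by rewrite /w mulgA tperm2 mul1g.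
have [D1 D2] := leT_down eab hu wdesc.
case: (ltngtP (u a) (u b)) => h.
- have [t [ts st wt]] := IH' u (ltac:(rewrite -ww; exact: D1 h)).
  by exists t; split => //; apply: subseq_trans ts (subseq_rcons s k).
- have [t [ts st wt]] := IH' (tperm a b * u) (ltac:(rewrite -ww; exact: D2 h)).
  exists (rcons t k); split.
  + by rewrite -cats1 -[rcons s k]cats1 cat_subseq.
  + have := inv_swap u eab; rewrite size_rcons st h.
    have -> : (u a < u b) = false by lia.
    move=> h1; set z := inv (_ * u) in h1 *; lia.
  + by rewrite word_rcons wt sk mulgA tperm2 mul1g.
- by move: h => /val_inj /perm_inj ab; move: eab; rewrite ab; lia.
Qed.

Lemma bruhat_leT u w : bruhat u w <-> leT u w.
Proof.
split.
  case=> su [sw [/reduced_wordE [vu wu szu] /reduced_wordE [vw ww szw] sub]].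
  rewrite -wu -ww; apply: sub_leT => //; by rewrite ww.
move=> h; have [sw [vw ww szw]] := word_exists w.
have [t [ts st wt]] := leT_sub vw (ltac:(by rewrite ww)) (ltac:(by rewrite ww)).
exists t, sw; split => //; apply/reduced_wordE; split => //.
by apply/allP => x xt; apply: (allP vw); apply: (mem_subseq ts).
Qed.

Lemma sub_leT_red w s t : reduced_word w s -> subseq t s -> leT (word_perm n t) w.
Proof.
case/reduced_wordE => vs ws ss ts; rewrite -ws; apply: sub_leT => //; by rewrite ws.
Qed.

Lemma leT_subr w s u : reduced_word w s -> leT u w ->
  exists t, [/\ subseq t s, reduced_word u t & word_perm n t = u].
Proof.
case/reduced_wordE => vs ws ss h.
have [t [ts st wt]] := leT_sub vs (ltac:(by rewrite ws)) (ltac:(by rewrite ws)).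
exists t; split => //; apply/reduced_wordE; split => //.
by apply/allP => x xt; apply: (allP vs); apply: (mem_subseq ts).
Qed.

Lemma has_reduced w : exists s, reduced_word w s.
Proof.
by have [s [vs ws ss]] := word_exists w; exists s; apply/reduced_wordE.
Qed.

Lemma inv_sigma1 k : 0 < k < n -> inv (sigma n k) = 1%N.
Proof.
move=> kv; have [a [b [ea eb ->]]] := sigma_valid kv.
have eab : (b : nat) = (a : nat).+1 by lia.
have := inv_swap 1 eab; rewrite !perm1 inv1 mulg1.
have -> : (a < b) = true by lia.
have -> : (b < a) = false by lia.
by rewrite addn0.
Qed.

Lemma reduced_single k : 0 < k < n -> reduced_word (sigma n k) [:: k].
Proof.
move=> kv; apply/reduced_wordE; split; first by rewrite /valid_word /= kv.
  by rewrite /= mul1g.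
by rewrite inv_sigma1.
Qed.

Lemma sigma_ne1 k : 0 < k < n -> sigma n k != 1.
Proof. by move=> kv; apply/eqP => e; have := inv_sigma1 kv; rewrite e inv1. Qed.

Lemma sigma_at k (x : 'I_n) : 0 < k < n ->
  (sigma n k x : nat) = if (x : nat) == k.-1 then k else if (x : nat) == k then k.-1 else x.
Proof.
move=> kv; have [a [b [ea eb ->]]] := sigma_valid kv; rewrite tperm_val.
by rewrite -!(inj_eq val_inj) /= ea eb.
Qed.

Lemma ord_of k : k < n -> exists x : 'I_n, (x : nat) = k.
Proof. by move=> kn; exists (Ordinal kn). Qed.

Lemma sigma_inj k l : 0 < k < n -> 0 < l < n -> sigma n k = sigma n l -> k = l.
Proof.
move=> kv lv e.
have [x ex] : exists x : 'I_n, (x : nat) = k.-1 by apply: ord_of; lia.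
have := sigma_at x kv; have := sigma_at x lv; rewrite e => ->.
rewrite ex eqxx; move: kv lv; repeat case: eqP => //=; lia.
Qed.

Lemma sigma_comm i l : 0 < i < n -> 0 < l < n -> l != i -> l != i.+1 -> l.+1 != i ->
  sigma n i * sigma n l = sigma n l * sigma n i.
Proof.
move=> iv lv h1 h2 h3; apply/permP => x; rewrite !permM; apply: val_inj => /=.
rewrite (sigma_at (sigma n l x) iv) (sigma_at x lv) (sigma_at (sigma n i x) lv) (sigma_at x iv).
move: h1 h2 h3 iv lv.
by repeat case: eqP => //=; lia.
Qed.

Lemma word_comm i m : 0 < i < n ->
  all (fun l => [&& 0 < l < n, l != i, l != i.+1 & l.+1 != i]) m ->
  sigma n i * word_perm n m = word_perm n m * sigma n i.
Proof.
move=> iv; elim: m => [|l m IH] /=; first by rewrite mulg1 mul1g.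
case/andP => /and4P[lv h1 h2 h3] /IH e.
by rewrite mulgA e -!mulgA (sigma_comm iv lv).
Qed.

Lemma word1 k : word_perm n [:: k] = sigma n k.
Proof. by rewrite /= mul1g. Qed.

Lemma word2 x y : word_perm n [:: x; y] = sigma n y * sigma n x.
Proof. by rewrite /= mul1g. Qed.

Lemma reduced_pair x y : 0 < x < n -> 0 < y < n -> (y = x.+1 \/ y.+1 = x) ->
  reduced_word (word_perm n [:: x; y]) [:: x; y].
Proof.
move=> xv yv hxy; apply/reduced_wordE; split => //; first by rewrite /valid_word /= xv yv.
rewrite word2; have [a [b [ea eb ->]]] := sigma_valid yv.
have eab : (b : nat) = (a : nat).+1 by lia.
have := inv_swap (sigma n x) eab; rewrite inv_sigma1 //.
have -> : (sigma n x b < sigma n x a) = false.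
  rewrite (sigma_at b xv) (sigma_at a xv) eb ea.
  by move: xv yv; case: hxy => ?; subst; repeat case: eqP => //=; lia.
have -> : (sigma n x a < sigma n x b) = true.
  rewrite (sigma_at b xv) (sigma_at a xv) eb ea.
  by move: xv yv; case: hxy => ?; subst; repeat case: eqP => //=; lia.
move=> h; set z := inv (_ * sigma n x) in h *; rewrite /=; lia.
Qed.

Lemma pair_noncomm x y : 0 < x < n -> 0 < y < n -> (y = x.+1 \/ y.+1 = x) ->
  word_perm n [:: x; y] != word_perm n [:: y; x].
Proof.
move=> xv yv hxy; rewrite !word2; apply/eqP => e.
have [z ez] : exists z : 'I_n, (z : nat) = x.-1 by apply: ord_of; lia.
have := congr1 (fun p : {perm 'I_n} => (p z : nat)) e; rewrite /= !permM.
rewrite (sigma_at (sigma n y z) xv) (sigma_at z yv) (sigma_at (sigma n x z) yv) (sigma_at z xv) ez.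
by move: xv yv; case: hxy => ?; subst; repeat case: eqP => //=; lia.
Qed.

Lemma subseq2 (x y : nat) t : subseq t [:: x; y] ->
  [\/ t = [::], t = [:: x], t = [:: y] | t = [:: x; y]].
Proof.
case/subseqP => m; case: m => [|b1 [|b2 [|? ?]]] //= _ ->.
by case: b1; case: b2; [apply: Or44|apply: Or42|apply: Or43|apply: Or41].
Qed.

Lemma subseq1 (x : nat) t : subseq t [:: x] -> t = [::] \/ t = [:: x].
Proof.
case/subseqP => m; case: m => [|b1 [|? ?]] //= _ ->.
by case: b1; [right|left].
Qed.

Lemma single_le x y : 0 < x < n -> 0 < y < n -> leT (sigma n y) (sigma n x) -> y = x.
Proof.
move=> xv yv h; have [t [ts rt wt]] := leT_subr (reduced_single xv) h.
case/subseq1: ts wt => -> /=.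
  by move=> e; have := sigma_ne1 yv; rewrite -e eqxx.
by rewrite mul1g => e; apply: sigma_inj => //.
Qed.

Lemma pair_top x y J : 0 < x < n -> 0 < y < n -> x != y ->
  reduced_word (word_perm n [:: x; y]) [:: x; y] ->
  leT (sigma n x) J -> leT (sigma n y) J -> leT J (word_perm n [:: x; y]) ->
  J = word_perm n [:: x; y].
Proof.
move=> xv yv xy red hx hy hJ; have [t [ts rt wt]] := leT_subr red hJ.
case/subseq2: ts wt => -> /= e.
- have : sigma n x = 1 by apply: leT_antisym; [rewrite e | apply: one_leT].
  by move/eqP; rewrite (negPf (sigma_ne1 xv)).
- move: hy; rewrite -e mul1g => /(single_le xv yv) yx.
  by move: xy; rewrite yx eqxx.
- move: hx; rewrite -e mul1g => /(single_le yv xv) yx.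
  by move: xy; rewrite yx eqxx.
- by rewrite -e.
Qed.

Lemma split_first (x : nat) s : x \in s -> exists p1 p2, s = p1 ++ x :: p2 /\ x \notin p1.
Proof.
elim: s => [|y s IH] //=; rewrite in_cons; case: (eqVneq x y) => [->|xy] /=.
  by move=> _; exists [::], s.
move=> /IH [p1 [p2 [-> h]]]; exists (y :: p1), p2; split => //.
by rewrite in_cons negb_or xy h.
Qed.

Lemma between_mem s1 s2 (x j : nat) : between (s1 ++ x :: s2) (size s1) j ->
  j \in s1 /\ j \in s2.
Proof.
case=> a [b [/andP[ha hb] hbs ea eb]]; split.
  by rewrite -ea nth_cat ha mem_nth.
rewrite -eb nth_cat ltnNge (ltnW hb) /=.
have -> : b - size s1 = (b - size s1 - 1).+1 by lia.
rewrite /= mem_nth //; move: hbs; rewrite size_cat /=; lia.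
Qed.

Lemma Bint_eq w (u v : Bint w) : sval u = sval v -> u = v.
Proof.
case: u v => [u hu] [v hv] /= e; subst v; congr exist; exact: proof_irrelevance.
Qed.

Lemma subseq_i_k_i (i k : nat) p1 m p3 : k \in m ->
  subseq [:: i; k; i] (p1 ++ i :: m ++ i :: p3).
Proof.
move=> km; rewrite -[[:: i; k; i]]cat0s; apply: cat_subseq; first exact: sub0seq.
rewrite /= eqxx -[[:: k; i]]/([:: k] ++ [:: i]); apply: cat_subseq; first by rewrite sub1seq.
by rewrite sub1seq mem_head.
Qed.

Lemma sub_iki1 (i k : nat) : subseq [:: i; k] [:: i; k; i].
Proof. exact: (prefix_subseq [:: i; k] [:: i]). Qed.

Lemma sub_iki2 (i k : nat) : subseq [:: k; i] [:: i; k; i].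
Proof. by have := suffix_subseq [:: i] [:: k; i]. Qed.

Lemma subseq_k_i_k (i k : nat) p1 p2 : k \in p1 -> k \in p2 ->
  subseq [:: k; i; k] (p1 ++ i :: p2).
Proof.
move=> h1 h2; rewrite -[[:: k; i; k]]/([:: k] ++ [:: i; k]); apply: cat_subseq.
  by rewrite sub1seq.
by rewrite /= eqxx sub1seq.
Qed.

Theorem dir1 w : prism w -> exists (i : nat) (s : seq nat), reduced_word w s /\ unconfined_in s i.
Proof.
case=> X [leX [f [[rX aX tX] [g fg gf] iso]]].
have iso' : forall u v : Bint w, leT (sval u) (sval v) <->
    le2 (f u).1 (f v).1 /\ leX (f u).2 (f v).2.
  by move=> u v; rewrite -bruhat_leT.
pose mk (u : {perm 'I_n}) (h : leT u w) : Bint w := exist _ u (proj2 (bruhat_leT u w) h).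
have [sw rsw] := has_reduced w.
have rsw' := rsw; case/reduced_wordE: rsw' => vsw wsw ssw.
pose e := mk 1 (one_leT w).
set x0 := (f e).2.
have fe : forall u : Bint w, le2 (f e).1 (f u).1 /\ leX x0 (f u).2.
  by move=> u; apply/iso'; apply: one_leT.
have b0 : (f e).1 = false.
  case E: (f e).1 => //; have := (fe (g (false, x0))).1; rewrite gf E.
  by [].
pose a := g (true, x0).
have fa : f a = (true, x0) by rewrite gf.
have a1 : sval a != 1.
  apply/eqP => h; have ea : a = e by apply: Bint_eq.
  by move: fa; rewrite ea; case: (f e) b0 => ? ? /= ->.
have aw : leT (sval a) w by apply/bruhat_leT; exact: (svalP a).
have [ra rra] := has_reduced (sval a).
case: ra rra => [|i r] rra.
  by case/reduced_wordE: rra => _ /= h _; move: a1; rewrite -h eqxx.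
have rra' := rra; case/reduced_wordE: rra' => vra _ _.
have iv : 0 < i < n by move: vra => /andP[].
have sia : leT (sigma n i) (sval a).
  have := sub_leT_red rra (ltac:(by rewrite /= eqxx sub0seq) : subseq [:: i] (i :: r)).
  by rewrite word1.
have siw : leT (sigma n i) w := leT_trans sia aw.
pose si := mk _ siw.
have fsi : f si = (true, x0).
  have h1 := (iso' si a).1 sia; rewrite fa /= in h1; case: h1 => h1 h2.
  have h3 := (fe si).2.
  have e2 : (f si).2 = x0 by apply: aX.
  case E: (f si).1 => //.
    by rewrite [f si]surjective_pairing E e2.
  have : f si = f e by rewrite [f si]surjective_pairing [f e]surjective_pairing E b0 e2.
  move/(congr1 g); rewrite !fg => /(congr1 sval) /= /eqP.
  by rewrite (negPf (sigma_ne1 iv)).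
have K : forall k, 0 < k < n -> (k = i.+1 \/ k.+1 = i) ->
    subseq [:: i; k] sw -> subseq [:: k; i] sw -> False.
  move=> k kv hk s1 s2.
  have ki : k != i by apply/eqP => ki; case: hk; lia.
  have u1w := sub_leT_red rsw s1.
  have u2w := sub_leT_red rsw s2.
  have red1 := reduced_pair iv kv hk.
  have hk' : i = k.+1 \/ i.+1 = k by case: hk => ?; [right|left]; lia.
  have red2 := reduced_pair kv iv hk'.
  have skw : leT (sigma n k) w.
    have := sub_leT_red rsw (subseq_trans (ltac:(by rewrite sub1seq mem_head) : subseq [:: k] [:: k; i]) s2).
    by rewrite word1.
  pose sk := mk _ skw.
  have fsk1 : (f sk).1 = false.
    case E: (f sk).1 => //.
    have : leT (sigma n i) (sigma n k).
      apply: (proj2 (iso' si sk)); rewrite fsi E; split => //=; exact: (fe sk).2.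
    by move/(single_le kv iv)/eqP; rewrite eq_sym (negPf ki).
  set beta := (f sk).2.
  pose jj := g (true, beta).
  have fjj : f jj = (true, beta) by rewrite gf.
  have sij : leT (sigma n i) (sval jj).
    apply: (proj2 (iso' si jj)); rewrite fsi fjj; split => //=; exact: (fe sk).2.
  have skj : leT (sigma n k) (sval jj).
    apply: (proj2 (iso' sk jj)); rewrite fjj fsk1; split => //=; exact: rX.
  have top : forall x y, 0 < x < n -> 0 < y < n -> (y = x.+1 \/ y.+1 = x) ->
      ((x == i) && (y == k)) || ((x == k) && (y == i)) ->
      forall (hU : leT (word_perm n [:: x; y]) w),
      leT (sval jj) (word_perm n [:: x; y]).
    move=> x y xv yv hxy hxyik hU; pose U := mk _ hU.
    have rU := reduced_pair xv yv hxy.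
    have xU : leT (sigma n x) (word_perm n [:: x; y]).
      by have := sub_leT_red rU (ltac:(by rewrite sub1seq mem_head) : subseq [:: x] [:: x; y]); rewrite word1.
    have yU : leT (sigma n y) (word_perm n [:: x; y]).
      by have := sub_leT_red rU (suffix_subseq [:: x] [:: y]); rewrite word1.
    have iU : leT (sigma n i) (sval U) /\ leT (sigma n k) (sval U).
      by case/orP: hxyik => /andP[/eqP <- /eqP <-].
    have h1 := (iso' si U).1 iU.1; have h2 := (iso' sk U).1 iU.2.
    rewrite fsi in h1; rewrite fsk1 in h2.
    apply: (proj2 (iso' jj U)); rewrite fjj; case: h1 => h1a h1b; case: h2 => h2a h2b.
    by split.
  have e1 := pair_top iv kv (ltac:(by rewrite eq_sym)) red1 sij skj
    (top i k iv kv hk (ltac:(by rewrite !eqxx)) u1w).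
  have e2 := pair_top kv iv ki red2 skj sij
    (top k i kv iv hk' (ltac:(by rewrite !eqxx orbT)) u2w).
  by have := pair_noncomm iv kv hk; rewrite -e1 -e2 eqxx.
have isw : i \in sw.
  have [t [ts rt wt]] := leT_subr rsw siw.
  case/reduced_wordE: rt => vt _ st; rewrite inv_sigma1 // in st.
  case: t ts st wt vt => [|l [|? ?]] //= ts _; rewrite mul1g => el vt.
  have lv : 0 < l < n by move: vt => /andP[].
  by have := sigma_inj lv iv el => ell; move: ts; rewrite ell sub1seq.
have memv : forall l, l \in sw -> 0 < l < n by move=> l; apply: (allP vsw).
have [p1 [p2 [esw ip1]]] := split_first isw.
have ip2 : i \notin p2.
  apply/negP => ip2; have [m [p3 [ep2 im]]] := split_first ip2.
  rewrite ep2 in esw.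
  have msw : forall l, l \in m -> l \in sw.
    by move=> l lm; rewrite esw mem_cat in_cons mem_cat lm !orbT.
  have kik : forall k, k \in m -> subseq [:: i; k] sw /\ subseq [:: k; i] sw.
    move=> k km; rewrite esw; split.
      exact: subseq_trans (sub_iki1 i k) (subseq_i_k_i i p1 p3 km).
    exact: subseq_trans (sub_iki2 i k) (subseq_i_k_i i p1 p3 km).
  case: (boolP (i.+1 \in m)) => h1.
    have [s1 s2] := kik _ h1.
    exact: (K i.+1 (memv _ (msw _ h1)) (or_introl erefl) s1 s2).
  case: (boolP (i.-1 \in m)) => h2.
    have [s1 s2] := kik _ h2.
    have v2 := memv _ (msw _ h2).
    exact: (K i.-1 v2 (or_intror (prednK (andP iv).1)) s1 s2).
  have allm : all (fun l => [&& 0 < l < n, l != i, l != i.+1 & l.+1 != i]) m.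
    apply/allP => l lm; rewrite memv ?msw //=.
    apply/and3P; split.
    - by apply/eqP => ee; move: im; rewrite -ee lm.
    - by apply/eqP => ee; move: h1; rewrite -ee lm.
    - by apply/eqP => ee; move: h2; rewrite -ee /= lm.
  have wc := word_comm iv allm.
  case: rsw => _ _ /(_ (p1 ++ m ++ p3)).
  have vt : valid_word n (p1 ++ m ++ p3).
    by apply/allP => l; rewrite !mem_cat => /or3P[] h; apply: memv; rewrite esw !(mem_cat, in_cons) h ?orbT.
  have wt : word_perm n (p1 ++ m ++ p3) = w.
    rewrite -wsw esw !word_cat word_cons word_cat word_cons -!mulgA; congr (_ * _).
    by rewrite !mulgA wc -(mulgA (word_perm n m)) sigma_inv mulg1.
  move=> /(_ vt wt); rewrite esw !size_cat /= ?size_cat /=.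
  by move=> h; move: h; clear; lia.
have cnt : count_mem i sw = 1%N.
  by rewrite esw count_cat /= eqxx (count_memPn ip1) (count_memPn ip2).
have idx : index i sw = size p1 by rewrite esw index_cat (negPf ip1) /= eqxx addn0.
have p12 : forall k, k \in p1 -> k \in p2 -> 0 < k < n /\ subseq [:: i; k] sw /\ subseq [:: k; i] sw.
  move=> k h1 h2; split; first by apply: memv; rewrite esw mem_cat h1.
  have h := subseq_k_i_k i h1 h2; rewrite esw; split.
    exact: subseq_trans (suffix_subseq [:: k] [:: i; k]) h.
  exact: subseq_trans (prefix_subseq [:: k; i] [:: k]) h.
exists i, sw; split => //; split => //; rewrite idx esw => /between_mem [h1 h2];
  have [kv [s1 s2]] := p12 _ h1 h2.
  exact: (K i.+1 kv (or_introl erefl) s1 s2).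
exact: (K i.-1 kv (or_intror (prednK (andP iv).1)) s1 s2).
Qed.
End Basics.

Section Rect.
Variable n : nat.
Implicit Types (u w p q : {perm 'I_n}).

Lemma rk_rect u (c d : 'I_n) (P v : nat) : c < d -> u^-1 c < u^-1 d ->
  rk (u * tperm c d) P v =
  rk u P v + [&& u^-1 c < P, P <= u^-1 d, c < v & v <= d].
Proof.
move=> cd pcd.
have ne : u^-1 c != u^-1 d.
  by apply/eqP => e; move: pcd; rewrite e ltnn.
have H := @two_point _ (fun Q : 'I_n => (Q < P) && (v <= (u * tperm c d)%g Q))
   (fun Q : 'I_n => (Q < P) && (v <= u Q)) _ _ ne.
lapply H.
  rewrite /= !permM !permKV tpermL tpermR /rk => e.
  move: e cd pcd; set S1 := \sum_(i < n) _; set S2 := \sum_(i < n) _.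
  move=> e cd pcd; move: e.
  case: (ltnP (u^-1 c) P) => h1; case: (ltnP (u^-1 d) P) => h2;
  case: (leqP v c) => h3; case: (leqP v d) => h4 /=; lia.
move=> x xa xb /=; rewrite permM tpermD //.
  by apply: contraNneq xa => ->; rewrite permK.
by apply: contraNneq xb => ->; rewrite permK.
Qed.

Lemma sum_perm_lt u (v : nat) : \sum_(Q : 'I_n) (u Q < v : nat) = minn v n.
Proof.
rewrite (reindex_inj (h := u^-1) (@perm_inj _ (u^-1))) /=.
rewrite (eq_bigr (fun Q : 'I_n => (Q < v : nat))); last by move=> Q _; rewrite permKV.
by rewrite sum_lt_ord.
Qed.

Lemma rk_lower u (P v : nat) : P <= n -> P <= rk u P v + v.
Proof.
move=> Pn.
have h1 : \sum_(Q : 'I_n) (Q < P : nat) <= rk u P v + \sum_(Q : 'I_n) (u Q < v : nat).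
  rewrite /rk -big_split /=; apply: leq_sum => Q _.
  by case: (ltnP Q P); case: (leqP v (u Q)).
move: h1; rewrite sum_perm_lt sum_lt_ord; lia.
Qed.

Lemma rk_val u (c : 'I_n) (P : nat) : rk u P c = rk u P c.+1 + (u^-1 c < P).
Proof.
rewrite /rk (bigD1 (u^-1 c)) //= [in X in _ = X + _](bigD1 (u^-1 c)) //= permKV leqnn ltnn.
rewrite andbF /= add0n andbT addnC; congr (_ + _); apply: eq_bigr => Q hQ.
have : u Q != c by apply: contraNneq hQ => <-; rewrite permK.
by rewrite -(inj_eq val_inj) /= => h; rewrite [c <= _]leq_eqVlt eq_sym (negPf h).
Qed.

End Rect.

Section Dir2.
Variable n : nat.
Variable i : nat.
Hypothesis iv : 0 < i < n.
Variables (im1 oi : 'I_n).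
Hypothesis e1 : (im1 : nat) = i.-1.
Hypothesis e2 : (oi : nat) = i.
Implicit Types (u w p q : {perm 'I_n}).

Definition inJ u := forall Q : 'I_n, (Q < i) = (u Q < i).

Lemma inJ_inv p : inJ p -> forall c : 'I_n, (c < i) = (p^-1 c < i).
Proof. by move=> h c; rewrite (h (p^-1 c)) permKV. Qed.

Lemma inJ1 : inJ 1. Proof. by move=> Q; rewrite perm1. Qed.

Lemma inJM u v : inJ u -> inJ v -> inJ (u * v).
Proof. by move=> hu hv Q; rewrite permM -hv -hu. Qed.

Lemma inJ_sigma l : 0 < l < n -> l != i -> inJ (sigma n l).
Proof.
move=> lv li Q; rewrite (sigma_at Q lv); move: li iv lv.
by repeat case: eqP => //=; lia.
Qed.

Lemma inJ_word t : valid_word n t -> i \notin t -> inJ (word_perm n t).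
Proof.
elim: t => [|l t IH] /=; first by move=> _ _; exact: inJ1.
case/andP => lv vt; rewrite in_cons negb_or => /andP[il it].
by apply: inJM; [exact: IH | apply: inJ_sigma; rewrite // eq_sym].
Qed.

Lemma rk_inJ_Z1 p (P v : nat) : inJ p -> P <= i -> i <= v -> rk p P v = 0.
Proof.
move=> hp h1 h2; apply: big1 => Q _.
case: (ltnP Q P) => //= h; have : Q < i by lia.
by rewrite hp => h3; rewrite leqNgt (leq_trans h3 h2).
Qed.

Lemma rk_inJ_Z2 p (P v : nat) : inJ p -> v <= i -> i <= P -> P <= n -> rk p P v + v = P.
Proof.
move=> hp h1 h2 h3; apply/eqP; rewrite eqn_leq; apply/andP; split; last first.
  by rewrite addnC; rewrite -[P]/(P) -{1}[P]/(P); apply: (leq_trans (rk_lower p v h3)); rewrite addnC.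
have h : rk p P v + \sum_(Q : 'I_n) (p Q < v : nat) <= \sum_(Q : 'I_n) (Q < P : nat).
  rewrite /rk -big_split /=; apply: leq_sum => Q _.
  case: (ltnP (p Q) v) => h4; case: (ltnP Q P) => h5; case: (leqP v (p Q)) => h6 //=; try lia.
  have : p Q < i by lia.
  by rewrite -hp; lia.
move: h; rewrite sum_perm_lt sum_lt_ord; lia.
Qed.

Variables fa fb : bool.
Definition aa p := if fa then im1 else p im1.
Definition bb p := if fb then oi else p oi.
Definition hh p := p * tperm (aa p) (bb p).

Lemma im1_lt : im1 < i. Proof. by rewrite e1; case/andP: iv; lia. Qed.
Lemma oi_ge : i <= oi. Proof. by rewrite e2. Qed.

Lemma aa_facts p : inJ p ->
  [/\ aa p < i, p^-1 (aa p) < i & (aa p : nat) = i.-1 \/ (p^-1 (aa p) : nat) = i.-1].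
Proof.
move=> hp; rewrite /aa; case: fa.
  by split; [exact: im1_lt | rewrite -inJ_inv // im1_lt | left].
by rewrite permK; split; [rewrite -hp im1_lt | exact: im1_lt | right].
Qed.

Lemma bb_facts p : inJ p ->
  [/\ i <= bb p, i <= p^-1 (bb p) & (bb p : nat) = i \/ (p^-1 (bb p) : nat) = i].
Proof.
have oin : (oi < i) = false by rewrite e2 ltnn.
move=> hp; rewrite /bb; case: fb.
  by split; [exact: oi_ge | rewrite leqNgt -inJ_inv // oin | left].
by rewrite permK; split; [rewrite leqNgt -hp oin | exact: oi_ge | right].
Qed.

Lemma rk_hh p (P v : nat) : inJ p ->
  rk (hh p) P v = rk p P v +
    [&& p^-1 (aa p) < P, P <= p^-1 (bb p), aa p < v & v <= bb p].
Proof.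
move=> hp; have [a1 a2 _] := aa_facts hp; have [b1 b2 _] := bb_facts hp.
apply: rk_rect; lia.
Qed.

Lemma hh_up p : inJ p -> leT p (hh p).
Proof. by move=> hp P v; rewrite rk_hh // leq_addr. Qed.

Lemma hh_notJ p q : inJ p -> inJ q -> ~ leT (hh p) q.
Proof.
move=> hp hq h; have := h i i; rewrite rk_hh // (rk_inJ_Z1 hq) // (rk_inJ_Z1 hp) //.
have [a1 a2 _] := aa_facts hp; have [b1 b2 _] := bb_facts hp.
by rewrite a2 b2 a1 b1.
Qed.

Lemma H4 p q : inJ p -> inJ q -> leT p (hh q) -> leT p q.
Proof.
move=> hp hq h P v; have := h P v; rewrite rk_hh //.
have [a1 a2 a3] := aa_facts hq; have [b1 b2 b3] := bb_facts hq.
case: andP => [[r1 /and3P[r2 r3 r4]] _|_]; last by rewrite addn0.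
have Pn : P <= n by have := ltn_ord (q^-1 (bb q)); lia.
have [Z|Z] : (P <= i <= v) \/ (v <= i <= P) by case/andP: iv; lia.
  by case/andP: Z => z1 z2; rewrite (rk_inJ_Z1 hp).
case/andP: Z => z1 z2; have := rk_inJ_Z2 hp z1 z2 Pn; have := rk_lower q v Pn; lia.
Qed.

Lemma S1 p q (P : nat) : inJ p -> inJ q -> leT p q -> p^-1 im1 < P -> q^-1 im1 < P.
Proof.
move=> hp hq h lt.
have qi : q^-1 im1 < i by rewrite -inJ_inv // im1_lt.
case: (leqP i P) => iP; first by lia.
have E u : inJ u -> rk u P im1 = (u^-1 im1 < P).
  move=> hu; rewrite rk_val; have -> : (im1 : nat).+1 = i by rewrite e1; case/andP: iv; lia.
  by rewrite (rk_inJ_Z1 hu) //; lia.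
by have := h P im1; rewrite !E // lt; case: (_ < _).
Qed.

Lemma S2 p q (P : nat) : inJ p -> inJ q -> leT p q -> P <= p^-1 oi -> P <= q^-1 oi.
Proof.
move=> hp hq h le.
have qi : i <= q^-1 oi by rewrite leqNgt -inJ_inv // e2 ltnn.
case: (leqP P i) => iP; first by lia.
have Pn : P <= n by have := ltn_ord (p^-1 oi); lia.
have E u : inJ u -> rk u P oi.+1 + (u^-1 oi < P) + i = P.
  by move=> hu; rewrite -rk_val e2 (rk_inJ_Z2 hu) //; lia.
have := h P oi.+1; have := E p hp; have := E q hq.
by case: (ltnP (p^-1 oi) P); case: (ltnP (q^-1 oi) P) => /=; lia.
Qed.

Lemma S3 p q (v : nat) : inJ p -> inJ q -> leT p q -> p im1 < v -> q im1 < v.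
Proof.
move=> hp hq h lt.
have qi : q im1 < i by rewrite -hq im1_lt.
case: (leqP i v) => iv'; first by lia.
have E u : inJ u -> rk u im1 v + (v <= u im1) + v = i.
  move=> hu; rewrite -rk_succ; have -> : (im1 : nat).+1 = i by rewrite e1; case/andP: iv; lia.
  by rewrite (rk_inJ_Z2 hu) //; [lia | case/andP: iv; lia].
have := h im1 v; have := E p hp; have := E q hq.
by case: (leqP v (p im1)); case: (leqP v (q im1)) => /=; lia.
Qed.

Lemma S4 p q (v : nat) : inJ p -> inJ q -> leT p q -> v <= p oi -> v <= q oi.
Proof.
move=> hp hq h le.
have qi : i <= q oi by rewrite leqNgt -hq e2 ltnn.
case: (leqP v i) => iv'; first by lia.
have E u : inJ u -> rk u oi.+1 v = (v <= u oi).
  by move=> hu; rewrite rk_succ (rk_inJ_Z1 hu) ?e2 //; lia.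
by have := h oi.+1 v; rewrite !E // le; case: (v <= _).
Qed.

Lemma H5 p q : inJ p -> inJ q -> leT p q -> leT (hh p) (hh q).
Proof.
move=> hp hq h P v; rewrite !rk_hh //.
apply: leq_add; first exact: h.
case: and4P => // [[r1 r2 r3 r4]]; rewrite /= lt0b; apply/and4P; split.
- move: r1; rewrite /aa; case: fa; first exact: S1.
  by rewrite !permK.
- move: r2; rewrite /bb; case: fb; first exact: S2.
  by rewrite !permK.
- move: r3; rewrite /aa; case: fa => //; exact: S3.
- move: r4; rewrite /bb; case: fb => //; exact: S4.
Qed.

Lemma fix_word t (x : 'I_n) : valid_word n t ->
  (forall l, l \in t -> (l != x.+1) && (l != x)) -> word_perm n t x = x.
Proof.
elim: t => [|l t IH] /=; first by rewrite perm1.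
case/andP => lv vt h; rewrite permM IH //; last by move=> l' l't; apply: h; rewrite in_cons l't orbT.
apply: val_inj; rewrite /= (sigma_at x lv).
have := h l (mem_head _ _); move: lv; repeat case: eqP => //=; lia.
Qed.

Lemma sigma_i : sigma n i = tperm im1 oi.
Proof. by apply: sigmaE; rewrite ?e1 ?e2 //; case/andP: iv. Qed.

Lemma H1 x' y' : valid_word n x' -> valid_word n y' -> i \notin x' -> i \notin y' ->
  (if fa then i.-1 \notin x' else i.-1 \notin y') ->
  (if fb then i.+1 \notin x' else i.+1 \notin y') ->
  word_perm n (x' ++ i :: y') = hh (word_perm n (x' ++ y')).
Proof.
move=> vx vy ix iy ca cb.
have i0 : 0 < i by case/andP: iv.
have fix1 : forall s, valid_word n s -> i \notin s -> i.-1 \notin s -> word_perm n s im1 = im1.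
  move=> s vs is1 is2; apply: fix_word => // l ls; rewrite e1 (prednK i0).
  by apply/andP; split; apply/eqP => el; move: ls; rewrite el ?(negPf is1) ?(negPf is2).
have fix2 : forall s, valid_word n s -> i \notin s -> i.+1 \notin s -> word_perm n s oi = oi.
  move=> s vs is1 is2; apply: fix_word => // l ls; rewrite e2.
  by apply/andP; split; apply/eqP => el; move: ls; rewrite el ?(negPf is1) ?(negPf is2).
set X := word_perm n x'; set Y := word_perm n y'.
have hA : aa (word_perm n (x' ++ y')) = X im1.
  rewrite /aa word_cat; move: ca; case: fa => ca.
    by rewrite /X fix1.
  by rewrite permM /Y fix1.
have hB : bb (word_perm n (x' ++ y')) = X oi.
  rewrite /bb word_cat; move: cb; case: fb => cb.
    by rewrite /X fix2.
  by rewrite permM /Y fix2.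
rewrite /hh hA hB -tpermJ conjgE word_cat word_cat /= -/Y -/X sigma_i.
by rewrite -!mulgA mulVKg.
Qed.

Lemma notJ_red u t : reduced_word u t -> i \in t -> ~ inJ u.
Proof.
move=> rt it ju.
have h : leT (sigma n i) u.
  by have := sub_leT_red rt (ltac:(by rewrite sub1seq) : subseq [:: i] t); rewrite word1.
have := h i i; rewrite (rk_inJ_Z1 ju) // sigma_i -[tperm im1 oi]mulg1.
have eb : (oi : nat) = (im1 : nat).+1 by rewrite e1 e2; case/andP: iv; lia.
by rewrite -{1}e2 (rk_swap_b 1 i eb) perm1 e2 leqnn addn1.
Qed.

Lemma subseq_split t (x y : seq nat) (c : nat) : subseq t (x ++ c :: y) ->
  exists x' y' (b : bool), [/\ t = x' ++ (if b then c :: y' else y'), subseq x' x & subseq y' y].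
Proof.
case/subseqP => m; rewrite size_cat /= => sm ->.
rewrite -(cat_take_drop (size x) m) mask_cat; last by rewrite size_takel // sm leq_addr.
case E: (drop (size x) m) => [|b m2].
  by move: (congr1 size E); rewrite size_drop sm /=; lia.
exists (mask (take (size x) m) x), (mask m2 y), b; split; try exact: mask_subseq.
by case: b E.
Qed.

Variables (w : {perm 'I_n}) (s x y : seq nat).
Hypothesis rs : reduced_word w s.
Hypothesis es : s = x ++ i :: y.
Hypotheses (ix : i \notin x) (iy : i \notin y).
Hypothesis hfa : fa = (i.-1 \notin x).
Hypothesis hfb : fb = (i.+1 \notin x).
Hypothesis ua : i.-1 \in x -> i.-1 \notin y.
Hypothesis ub : i.+1 \in x -> i.+1 \notin y.

Lemma vs : valid_word n s. Proof. by case/reduced_wordE: rs. Qed.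

Lemma sub_parts x' y' : subseq x' x -> subseq y' y ->
  [/\ valid_word n x', valid_word n y', i \notin x', i \notin y' &
      (if fa then i.-1 \notin x' else i.-1 \notin y') /\
      (if fb then i.+1 \notin x' else i.+1 \notin y')].
Proof.
move=> sx sy.
have nx : forall l, l \notin x -> l \notin x' by move=> l; apply: contra; apply: (mem_subseq sx).
have ny : forall l, l \notin y -> l \notin y' by move=> l; apply: contra; apply: (mem_subseq sy).
have [vx vy] : valid_word n x /\ valid_word n y.
  by have := vs; rewrite es valid_cat /valid_word /= => /andP[-> /andP[_ ->]].
split; try by [apply: nx | apply: ny]; last split.
- apply/allP => l lx; apply: (allP vx); exact: (mem_subseq sx).
- apply/allP => l ly; apply: (allP vy); exact: (mem_subseq sy).
- rewrite hfa; case: ifP => h; first exact: nx.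
  by apply: ny; apply: ua; move/negbFE: h.
- rewrite hfb; case: ifP => h; first exact: nx.
  by apply: ny; apply: ub; move/negbFE: h.
Qed.

Lemma word_decomp t : reduced_word (word_perm n t) t -> subseq t s ->
  exists x' y', [/\ subseq x' x, subseq y' y &
    ((t = x' ++ y' /\ inJ (word_perm n t)) \/
    (t = x' ++ i :: y' /\ word_perm n t = hh (word_perm n (x' ++ y'))))].
Proof.
move=> rt; rewrite es => /subseq_split [x' [y' [b [et sx sy]]]].
have [vx vy ix' iy' [ca cb]] := sub_parts sx sy.
exists x', y'; split => //; case: b et => et; [right|left]; split => //.
  by rewrite et H1.
by rewrite et; apply: inJ_word; [rewrite valid_cat vx vy | rewrite mem_cat negb_or ix' iy'].
Qed.

Lemma hh_in p : leT p w -> inJ p -> leT (hh p) w.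
Proof.
move=> hp jp; have [t [ts rt wt]] := leT_subr rs hp.
rewrite -wt in rt; have [x' [y' [sx sy [[et _]|[et e]]]]] := word_decomp rt ts.
  have [vx vy ix' iy' [ca cb]] := sub_parts sx sy.
  rewrite -wt et -H1 //; apply: (sub_leT_red rs); rewrite es.
  by apply: cat_subseq => //=; rewrite eqxx.
exfalso; apply: (notJ_red rt); first by rewrite et mem_cat mem_head orbT.
by rewrite wt.
Qed.

Definition XT := {p : {perm 'I_n} | leT p w /\ inJ p}.
Definition leXT (p q : XT) := leT (sval p) (sval q).
Definition gval (z : bool * XT) := if z.1 then hh (sval z.2) else sval z.2.

Lemma gval_le z : leT (gval z) w.
Proof.
case: z => [[] [p [hp jp]]] /=; last by [].
exact: hh_in.
Qed.

Definition gB (z : bool * XT) : Bint w := exist _ (gval z) (proj2 (bruhat_leT _ _) (gval_le z)).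

Lemma key z1 z2 : leT (gval z1) (gval z2) <-> le2 z1.1 z2.1 /\ leXT z1.2 z2.2.
Proof.
case: z1 z2 => [b1 [p [hp jp]]] [b2 [q [hq jq]]]; rewrite /gval /leXT /le2 /=.
case: b1; case: b2 => /=; split => //.
- by move=> h; split => //; apply: H4 => //; apply: leT_trans (hh_up jp) h.
- by case=> _ h; apply: H5.
- by move=> h; exfalso; apply: (hh_notJ jp jq h).
- by case.
- by move=> h; split => //; apply: H4.
- by case=> _ h; apply: leT_trans h (hh_up jq).
- by case.
Qed.

Lemma gB_surj (u : Bint w) : exists z, gB z = u.
Proof.
have hu : leT (sval u) w by apply/bruhat_leT; exact: (svalP u).
have [t [ts rt wt]] := leT_subr rs hu.
have rt' := rt; rewrite -wt in rt'.
have [x' [y' [sx sy [[et jt]|[et e]]]]] := word_decomp rt' ts.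
  have ju : inJ (sval u) by rewrite -wt.
  exists (false, exist _ (sval u) (conj hu ju)).
  by apply: Bint_eq.
have [vx vy ix' iy' [ca cb]] := sub_parts sx sy.
have hp : leT (word_perm n (x' ++ y')) w.
  apply: (sub_leT_red rs); rewrite es; apply: cat_subseq => //.
  exact: subseq_trans sy (subseq_cons y i).
have jp : inJ (word_perm n (x' ++ y')).
  by apply: inJ_word; [rewrite valid_cat vx vy | rewrite mem_cat negb_or ix' iy'].
exists (true, (exist (fun p => leT p w /\ inJ p) _ (conj hp jp) : XT)); apply: Bint_eq => /=.
by rewrite /gval /= -e wt.
Qed.

Lemma XT_eq (p q : XT) : sval p = sval q -> p = q.
Proof.
case: p q => [p hp] [q hq] /= e; subst q; congr exist; exact: proof_irrelevance.
Qed.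

Lemma gB_inj z1 z2 : gB z1 = gB z2 -> z1 = z2.
Proof.
move=> e; have e' : gval z1 = gval z2 by move: (congr1 sval e).
have [h1 h2] := (key z1 z2).1 (ltac:(by rewrite e'; apply: leT_refl)).
have [h3 h4] := (key z2 z1).1 (ltac:(by rewrite e'; apply: leT_refl)).
case: z1 z2 h1 h2 h3 h4 {e e'} => [b1 p] [b2 q] /= h1 h2 h3 h4.
have -> : b1 = b2 by move: h1 h3; rewrite /le2; case: b1; case: b2.
by rewrite (XT_eq (leT_antisym h2 h4)).
Qed.

Lemma prism_of : prism w.
Proof.
pose f (u : Bint w) : bool * XT := proj1_sig (constructive_indefinite_description _ (gB_surj u)).
have gf : forall u : Bint w, gB (f u) = u.
  by move=> u; rewrite /f; case: constructive_indefinite_description.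
exists XT, leXT, f; split.
- split.
  + by move=> p; apply: leT_refl.
  + by move=> p q h1 h2; apply: XT_eq; apply: leT_antisym.
  + by move=> p q r h1 h2; apply: leT_trans h1 h2.
- exists gB; first by move=> u; apply: gf.
  by move=> z; apply: gB_inj; rewrite gf.
- move=> u v; rewrite bruhat_leT.
  have E : forall u : Bint w, sval u = gval (f u) by move=> u'; rewrite -{1}(gf u').
  by rewrite !E key.
Qed.

End Dir2.

Lemma mem_between (x y : seq nat) (c j : nat) : j \in x -> j \in y ->
  between (x ++ c :: y) (size x) j.
Proof.
move=> jx jy; exists (index j x), (size x + (index j y).+1); split.
- by rewrite index_mem jx /=; lia.
- by rewrite size_cat /= ltn_add2l ltnS index_mem.
- by rewrite nth_cat index_mem jx nth_index.
- rewrite nth_cat ltnNge leq_addr /=.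
  have -> : size x + (index j y).+1 - size x = (index j y).+1 by lia.
  by rewrite /= nth_index.
Qed.

Theorem dir2 n (w : {perm 'I_n}) :
  (exists (i : nat) (s : seq nat), reduced_word w s /\ unconfined_in s i) -> prism w.
Proof.
case=> i [s [rs [cnt nb1 nb2]]].
have iin : i \in s by rewrite -has_pred1 has_count cnt.
have vs : valid_word n s by case/reduced_wordE: rs.
have iv : 0 < i < n by apply: (allP vs).
have [x [y [es ix]]] := split_first iin.
have iy : i \notin y.
  apply/count_memPn; move: cnt; rewrite es count_cat /= eqxx (count_memPn ix).
  by rewrite add0n add1n => /eqP; rewrite eqSS => /eqP.
have idx : index i s = size x by rewrite es index_cat (negPf ix) /= eqxx addn0.
have ua : i.-1 \in x -> i.-1 \notin y.
  by move=> h1; apply/negP => h2; apply: nb2; rewrite idx es; apply: mem_between.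
have ub : i.+1 \in x -> i.+1 \notin y.
  by move=> h1; apply/negP => h2; apply: nb1; rewrite idx es; apply: mem_between.
have [im1 e1] : exists z : 'I_n, (z : nat) = i.-1 by apply: ord_of; case/andP: iv; lia.
have [oi e2] : exists z : 'I_n, (z : nat) = i by apply: ord_of; case/andP: iv.
exact: (@prism_of n i iv im1 oi e1 e2 (i.-1 \notin x) (i.+1 \notin x) w s x y rs es ix iy erefl erefl ua ub).
Qed.

Theorem theorem2p11 (n : nat) (w : {perm 'I_n}) :
  prism w <->
  exists (i : nat) (s : seq nat), reduced_word w s /\ unconfined_in s i.
Proof.
split; first exact: dir1.
exact: dir2.
Qed.
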